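(* Let $(X,d)$ be a complete CAT(0) space and let $(A,B)$ be a pair of nonempty, closed, convex, bounded subsets of $X$ which is proximal. Let $T:A\cup B\to A\cup B$ be a noncyclic relatively nonexpansive mapping. Then $T$ is nonexpansive, i.e., $d(Tx,Ty)\le d(x,y)$ for all $x,y\in A\cup B$.
   Context: A CAT(0) space is a geodesic space in which every geodesic triangle satisfies $d(x,y)\le d_{\mathbb{E}^2}(\bar x,\bar y)$ for all points $x,y$ of the triangle and their comparison points in a Euclidean comparison triangle with the same side lengths. $\operatorname{dist}(A,B)=\inf\{d(x,y):x\in A,y\in B\}$. The pair $(A,B)$ is proximal if for every $(a,b)\in A\times B$ there is $(a',b')\in A\times B$ with $d(a,b')=d(a',b)=\operatorname{dist}(A,B)$. $T$ is relatively nonexpansive if $d(Tx,Ty)\le d(x,y)$ for all $x\in A$, $y\in B$, and noncyclic if $T(A)\subseteq A$, $T(B)\subseteq B$. *)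

(* Defs.v *)
From mathcomp Require Import all_boot all_order all_algebra.
From mathcomp Require Import all_classical all_reals.
Set Implicit Arguments. Unset Strict Implicit. Unset Printing Implicit Defensive.
Import Order.TTheory GRing.Theory Num.Theory.
Local Open Scope ring_scope.
Local Open Scope classical_set_scope.

Section CAT0.
Variables (R : realType) (X : Type) (d : X -> X -> R).

Definition is_metric : Prop :=
  [/\ (forall x y, 0 <= d x y),
      (forall x y, d x y = 0 <-> x = y),
      (forall x y, d x y = d y x) &
      (forall x y z, d x z <= d x y + d y z)].

Definition geodesic (g : R -> X) (x y : X) : Prop :=
  g 0 = x /\ g 1 = y /\
  forall s t, 0 <= s <= 1 -> 0 <= t <= 1 -> d (g s) (g t) = `|s - t| * d x y.

Definition geodesic_space : Prop :=
  forall x y, exists g, geodesic g x y.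

Definition edist (p q : R * R) : R :=
  Num.sqrt ((p.1 - q.1) ^+ 2 + (p.2 - q.2) ^+ 2).

Definition lerp (p q : R * R) (t : R) : R * R :=
  (p.1 + t * (q.1 - p.1), p.2 + t * (q.2 - p.2)).

(* p is a point of the geodesic triangle with sides g1 (x->y), g2 (y->z),
   g3 (z->x), and pb is its comparison point in the comparison triangle
   xb yb zb *)
Definition tri_point (g1 g2 g3 : R -> X) (xb yb zb : R * R)
  (p : X) (pb : R * R) : Prop :=
  exists t, 0 <= t <= 1 /\
   [\/ p = g1 t /\ pb = lerp xb yb t,
       p = g2 t /\ pb = lerp yb zb t |
       p = g3 t /\ pb = lerp zb xb t].

Definition CAT0_ineq : Prop :=
  forall (x y z : X) (g1 g2 g3 : R -> X) (xb yb zb : R * R),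
    geodesic g1 x y -> geodesic g2 y z -> geodesic g3 z x ->
    edist xb yb = d x y -> edist yb zb = d y z -> edist zb xb = d z x ->
    forall p q pb qb, tri_point g1 g2 g3 xb yb zb p pb ->
      tri_point g1 g2 g3 xb yb zb q qb -> d p q <= edist pb qb.

Definition CAT0_space : Prop := [/\ is_metric, geodesic_space & CAT0_ineq].

Definition cauchy_seq (u : nat -> X) : Prop :=
  forall e : R, 0 < e -> exists N, forall m n, (N <= m)%N -> (N <= n)%N ->
    d (u m) (u n) < e.

Definition converges_to (u : nat -> X) (l : X) : Prop :=
  forall e : R, 0 < e -> exists N, forall n, (N <= n)%N -> d (u n) l < e.

Definition complete_space : Prop :=
  forall u, cauchy_seq u -> exists l, converges_to u l.

Definition closed_set (A : set X) : Prop :=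
  forall u l, (forall n, A (u n)) -> converges_to u l -> A l.

Definition convex_set (A : set X) : Prop :=
  forall x y g, A x -> A y -> geodesic g x y ->
    forall t, 0 <= t <= 1 -> A (g t).

Definition bounded_set (A : set X) : Prop :=
  exists M : R, forall x y, A x -> A y -> d x y <= M.

Definition dist_sets (A B : set X) : R :=
  inf [set r | exists a b, A a /\ B b /\ r = d a b].

Definition proximal (A B : set X) : Prop :=
  forall a b, A a -> B b -> exists a' b', A a' /\ B b' /\
    d a b' = dist_sets A B /\ d a' b = dist_sets A B.

Definition relatively_nonexpansive (A B : set X) (T : X -> X) : Prop :=
  forall x y, A x -> B y -> d (T x) (T y) <= d x y.

Definition noncyclic (A B : set X) (T : X -> X) : Prop :=
  (forall x, A x -> A (T x)) /\ (forall x, B x -> B (T x)).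

End CAT0.

(* Main.v *)
Require Import Defs.
From mathcomp Require Import all_boot all_order all_algebra.
From mathcomp Require Import all_classical all_reals.
From mathcomp Require Import ring lra.
Import Order.TTheory GRing.Theory Num.Theory.
Local Open Scope ring_scope.
Local Open Scope classical_set_scope.

Lemma sqrt_eq (R : realType) (x y : R) : 0 <= y -> x = y ^+ 2 -> Num.sqrt x = y.
Proof. by move=> hy ->; rewrite sqrtr_sqr ger0_norm. Qed.

Lemma comp_tri (R : realType) (a b c : R) : 0 <= a -> 0 <= b -> 0 <= c ->
  a <= b + c -> b <= a + c -> c <= a + b ->
  exists xb yb zb : R * R, edist xb yb = a /\ edist yb zb = b /\ edist zb xb = c.
Proof.
move=> ha hb hc t1 t2 t3.
have [a0|an0] := eqVneq a 0.
  have bc : b = c by lra.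
  exists (0,0), (0,0), (c,0); rewrite /edist /=; split; last split.
  - by apply: sqrt_eq => //; rewrite a0; ring.
  - by apply: sqrt_eq => //; rewrite bc; ring.
  - by apply: sqrt_eq => //; ring.
set p := (a ^+ 2 + c ^+ 2 - b ^+ 2) / (2 * a).
have hpos : 0 <= c ^+ 2 - p ^+ 2.
  have -> : c ^+ 2 - p ^+ 2 =
     ((b ^+ 2 - (a - c) ^+ 2) * ((a + c) ^+ 2 - b ^+ 2)) / (4 * a ^+ 2).
    by rewrite /p; field.
  apply: divr_ge0; last by apply: mulr_ge0 => //; rewrite sqr_ge0.
  apply: mulr_ge0.
    have -> : b ^+ 2 - (a - c) ^+ 2 = (b - (a - c)) * (b + (a - c)) by ring.
    apply: mulr_ge0; lra.
  have -> : (a + c) ^+ 2 - b ^+ 2 = (a + c - b) * (a + c + b) by ring.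
  apply: mulr_ge0; lra.
set h : R := Num.sqrt (c ^+ 2 - p ^+ 2).
have hh : h ^+ 2 = c ^+ 2 - p ^+ 2 by rewrite sqr_sqrtr.
exists (0,0), (a,0), (p,h); rewrite /edist /=; split; last split.
- by apply: sqrt_eq => //; ring.
- apply: sqrt_eq => //.
  have E : (a - p) ^+ 2 + (0 - h) ^+ 2 = a ^+ 2 - 2 * a * p + c ^+ 2 + (h ^+ 2 - (c ^+ 2 - p ^+ 2)).
  by clear hh; clearbody h p; ring.
  by rewrite E hh subrr addr0 /p; field.
- apply: sqrt_eq => //.
  have -> : (p - 0) ^+ 2 + (h - 0) ^+ 2 = p ^+ 2 + h ^+ 2 by ring.
  rewrite hh; ring.
Qed.

Lemma cn_id (R : realType) (x1 x2 y1 y2 z1 z2 t : R) :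
  (x1 + t * (y1 - x1) - (y1 + 1 * (z1 - y1))) ^+ 2 +
  (x2 + t * (y2 - x2) - (y2 + 1 * (z2 - y2))) ^+ 2 =
  (1 - t) * ((z1 - x1) ^+ 2 + (z2 - x2) ^+ 2) +
  t * ((y1 - z1) ^+ 2 + (y2 - z2) ^+ 2) -
  t * (1 - t) * ((x1 - y1) ^+ 2 + (x2 - y2) ^+ 2).
Proof. ring. Qed.

Lemma CN (R : realType) (X : Type) (d : X -> X -> R) :
  CAT0_space d -> forall q p r g, geodesic d g q p ->
  forall t, 0 <= t <= 1 ->
  d (g t) r ^+ 2 <= (1 - t) * d q r ^+ 2 + t * d p r ^+ 2 - t * (1 - t) * d q p ^+ 2.
Proof.
case=> [[h0 h1 hs ht] hgeo hcat] q p r g hg t ht01.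
have [g2 hg2] := hgeo p r.
have [g3 hg3] := hgeo r q.
have [xb [yb [zb [e1 [e2 e3]]]]] : exists xb yb zb : R * R,
  edist xb yb = d q p /\ edist yb zb = d p r /\ edist zb xb = d r q.
  apply: comp_tri => //.
  - by apply: (le_trans (ht q r p)); rewrite (hs q r) addrC (hs r p).
  - by apply: (le_trans (ht p q r)); rewrite (hs p q) (hs q r).
  - by apply: (le_trans (ht r p q)); rewrite (hs r p) (hs p q) addrC.
have tp1 : tri_point g g2 g3 xb yb zb (g t) (lerp xb yb t).
  by exists t; split => //; apply: Or31.
have tp2 : tri_point g g2 g3 xb yb zb r (lerp yb zb 1).
  exists 1; split; first by rewrite lexx ler01.
  by apply: Or32; case: hg2 => _ [-> _].
have H := hcat q p r g g2 g3 xb yb zb hg hg2 hg3 e1 e2 e3 _ _ _ _ tp1 tp2.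
have H2 : d (g t) r ^+ 2 <= edist (lerp xb yb t) (lerp yb zb 1) ^+ 2.
  by rewrite !expr2; apply: ler_pM => //; apply: h0.
apply: (le_trans H2).
rewrite (hs q r) -e1 -e2 -e3 /edist !sqr_sqrtr; try by apply: addr_ge0; apply: sqr_ge0.
clear e1 e2 e3 tp1 tp2 H H2; case: xb => x1 x2; case: yb => y1 y2; case: zb => z1 z2.
rewrite /lerp /=.
by rewrite cn_id.
Qed.

Lemma LB (R : realType) (X : Type) (d : X -> X -> R) (S : set X) (D : R) (q p r : X) :
  CAT0_space d -> convex_set d S -> S q -> S p -> d q r = D ->
  (forall w, S w -> D <= d w r) -> d p q ^+ 2 + D ^+ 2 <= d p r ^+ 2.
Proof.
move=> hC hcv Sq Sp hqr hS.
have hC' := hC; case: hC' => [[h0 h1 hs ht] hgeo hcat].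
have [g hg] := hgeo q p.
have D0 : 0 <= D by rewrite -hqr.
set a := d p q; set c := d p r.
have key : forall t, 0 < t <= 1 -> D ^+ 2 + a ^+ 2 - c ^+ 2 <= t * a ^+ 2.
  move=> t /andP [t0 t1].
  have ht01 : 0 <= t <= 1 by rewrite t1 ltW.
  have h1' := @CN R X d hC q p r g hg t ht01.
  have h2 : D <= d (g t) r by apply: hS; apply: (hcv q p g) => //.
  have h3 : D ^+ 2 <= d (g t) r ^+ 2.
    by rewrite !expr2; apply: ler_pM.
  have h4 := le_trans h3 h1'.
  rewrite hqr (hs q p) -/a -/c in h4.
  have h5 : 0 <= t * (t * a ^+ 2 - (D ^+ 2 + a ^+ 2 - c ^+ 2)).
    have -> : t * (t * a ^+ 2 - (D ^+ 2 + a ^+ 2 - c ^+ 2)) =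
      (1 - t) * D ^+ 2 + t * c ^+ 2 - t * (1 - t) * a ^+ 2 - D ^+ 2 by ring.
    by rewrite subr_ge0.
  by rewrite pmulr_rge0 // subr_ge0 in h5.
set del := D ^+ 2 + a ^+ 2 - c ^+ 2 in key.
have [hle|hlt] := leP del 0.
  by rewrite /del in hle; rewrite -subr_ge0; move: hle; set u := a ^+ 2; set v := D ^+ 2; set w := c ^+ 2; lra.
exfalso.
have k1 : del <= a ^+ 2 by rewrite -[a ^+ 2]mul1r; apply: key; rewrite ltr01 lexx.
have ha : 0 < a ^+ 2 by apply: (lt_le_trans hlt); apply: k1.
have k2 := key (del / (2 * a ^+ 2)).
have hpos : 0 < del / (2 * a ^+ 2) by apply: divr_gt0 => //; move: ha; set u := a ^+ 2; lra.
have hle1 : del / (2 * a ^+ 2) <= 1.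
  have ha2 : 0 < 2 * a ^+ 2 by move: ha; set u := a ^+ 2; lra.
  rewrite ler_pdivrMr //.
  move: k1 ha hlt; set u := a ^+ 2; lra.
have := k2; rewrite hpos hle1 => /(_ isT).
have -> : del / (2 * a ^+ 2) * a ^+ 2 = del / 2.
  have an0 : a != 0 by apply/eqP => a0; move: ha; rewrite a0 expr0n ltxx.
  by field.
move: hlt; lra.
Qed.

Lemma quad (R : realType) (X : Type) (d : X -> X -> R) (x y u v : X) :
  CAT0_space d ->
  d x v ^+ 2 + d y u ^+ 2 <= d x y ^+ 2 + d u v ^+ 2 + d x u ^+ 2 + d y v ^+ 2.
Proof.
move=> hC; have hC' := hC; case: hC' => [[h0 h1 hs ht] hgeo hcat].
have [g hg] := hgeo x v.
have t2 : 0 <= (2^-1 : R) <= 1.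
  by rewrite invr_ge0 ler0n /= invf_le1 ?ler1n ?ltr0n.
have cy := @CN R X d hC x v y g hg _ t2.
have cu := @CN R X d hC x v u g hg _ t2.
set z := g 2^-1 in cy cu.
have e := ht y z u.
have s1 := h0 z y; have s2 := h0 z u; have s3 := h0 y u.
rewrite (hs y z) in e.
have sq : d y u ^+ 2 <= (d z y + d z u) ^+ 2.
  by rewrite !expr2; apply: ler_pM => //; apply: addr_ge0.
rewrite (hs v y) (hs v u) in cy cu.
move: sq cy cu.
set A := d z y; set B := d z u; set E := d y u; set C := d x v.
set P := d x y; set Q := d u v; set U := d x u; set V := d y v.
move=> sq cy cu.
have : (A + B) ^+ 2 <= 2 * (A ^+ 2 + B ^+ 2).
  rewrite -subr_ge0.
  have -> : 2 * (A ^+ 2 + B ^+ 2) - (A + B) ^+ 2 = (A - B) ^+ 2 by ring.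
  exact: sqr_ge0.
move: sq cy cu.
have -> : (1 - 2^-1 : R) = 2^-1 by field.
nra.
Qed.

Lemma AA (R : realType) (X : Type) (d : X -> X -> R) (A B : set X) (D : R) (T : X -> X) :
  CAT0_space d -> convex_set d A -> convex_set d B ->
  (forall a b, A a -> B b -> D <= d a b) ->
  (forall a, A a -> exists b, B b /\ d a b = D) ->
  (forall x, A x -> A (T x)) -> (forall x, B x -> B (T x)) ->
  (forall x y, A x -> B y -> d (T x) (T y) <= d x y) ->
  forall x y, A x -> A y -> d (T x) (T y) <= d x y.
Proof.
move=> hC cA cB H0 Hp TA TB Hr x y Ax Ay.
have hC' := hC; case: hC' => [[h0 h1 hs ht] hgeo hcat].
have [v [Bv yv]] := Hp y Ay.
have [u [Bu xu]] := Hp x Ax.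
have L1 := @LB R X d A D y x v hC cA Ay Ax yv (fun w Aw => H0 w v Aw Bv).
have vy : d v y = D by rewrite hs.
have Hy : forall w, B w -> D <= d w y by move=> w Bw; rewrite hs; apply: H0.
have L2 := @LB R X d B D v u y hC cB Bv Bu vy Hy.
have Q := @quad R X d x y u v hC.
rewrite xu yv (hs y u) in Q.
have K : d x v ^+ 2 <= d x y ^+ 2 + D ^+ 2.
  move: L1 L2 Q; set a := d x v ^+ 2; set b := d u y ^+ 2; set c := d u v ^+ 2;
  set e := d x y ^+ 2; set f := D ^+ 2; lra.
have TyTv : d (T y) (T v) = D.
  apply/eqP; rewrite eq_le; apply/andP; split; last by apply: H0; [apply: TA | apply: TB].
  by rewrite -yv; apply: Hr.
have L3 := @LB R X d A D (T y) (T x) (T v) hC cA (TA _ Ay) (TA _ Ax) TyTv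
  (fun w Aw => H0 w (T v) Aw (TB _ Bv)).
have H4 : d (T x) (T v) ^+ 2 <= d x v ^+ 2.
  by rewrite !expr2; apply: ler_pM => //; apply: Hr.
have H5 : d (T x) (T y) ^+ 2 <= d x y ^+ 2.
  move: L3 H4 K; set a := d (T x) (T y) ^+ 2; set b := d (T x) (T v) ^+ 2;
  set c := d x v ^+ 2; set e := d x y ^+ 2; set f := D ^+ 2; lra.
have := h0 (T x) (T y); have := h0 x y; move: H5; nra.
Qed.

Theorem mainTheorem10 (R : realType) (X : Type) (d : X -> X -> R)
  (A B : set X) (T : X -> X) :
  CAT0_space d -> complete_space d ->
  A !=set0 -> B !=set0 ->
  closed_set d A -> closed_set d B ->
  convex_set d A -> convex_set d B ->
  bounded_set d A -> bounded_set d B ->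
  proximal d A B ->
  noncyclic A B T ->
  relatively_nonexpansive d A B T ->
  forall x y, (A `|` B) x -> (A `|` B) y -> d (T x) (T y) <= d x y.
Proof.
move=> hC _ [a0 Aa0] [b0 Bb0] _ _ cA cB _ _ hp [TA TB] hr.
have hC' := hC; case: hC' => [[h0 h1 hs ht] hgeo hcat].
set D := dist_sets d A B.
have H0 : forall a b, A a -> B b -> D <= d a b.
  move=> a b Aa Bb; apply: ge_inf.
    by exists 0 => r [a' [b' [_ [_ ->]]]].
  by exists a, b.
have HpA : forall a, A a -> exists b, B b /\ d a b = D.
  move=> a Aa; have [a' [b' [_ [Bb' [e _]]]]] := hp a b0 Aa Bb0.
  by exists b'.
have HpB : forall b, B b -> exists a, A a /\ d b a = D.
  move=> b Bb; have [a' [b' [Aa' [_ [_ e]]]]] := hp a0 b Aa0 Bb.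
  by exists a'; rewrite hs.
have H0' : forall b a, B b -> A a -> D <= d b a.
  by move=> b a Bb Aa; rewrite hs; apply: H0.
have hr' : forall x y, B x -> A y -> d (T x) (T y) <= d x y.
  by move=> x y Bx Ay; rewrite hs (hs x); apply: hr.
move=> x y [Ax|Bx] [Ay|By].
- exact: (@AA R X d A B D T hC cA cB H0 HpA TA TB hr).
- exact: hr.
- exact: hr'.
- exact: (@AA R X d B A D T hC cB cA H0' HpB TB TA hr').
Qed.
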